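(* Let $\omega_a,\omega_c,\kappa,\lambda>0$ and $N>0$, and assume $4\lambda^2\neq\omega_a\omega_c\big(1+\kappa^2/\omega_c^2\big)$. Define the real $4\times4$ matrices $$A=\begin{pmatrix}-\kappa&\omega_c&0&0\\-\omega_c&-\kappa&-2\sqrt2\,\lambda&0\\0&0&0&-\omega_a\\ \sqrt2\,\lambda&0&\omega_a&0\end{pmatrix},\qquad D=\frac{\kappa}{N}\begin{pmatrix}1&0&0&0\\0&1&0&0\\0&0&0&0\\0&0&0&0\end{pmatrix}.$$ Then every real symmetric $4\times 4$ matrix $V$ satisfying the Lyapunov equation $AV+VA^{T}=-D$ satisfies $$\frac12\big(V_{11}+V_{22}\big)-\frac{1}{2N}=\frac{1}{2N}\,\frac{\lambda^2}{\omega_a\omega_c-\dfrac{4\lambda^2}{1+\kappa^2/\omega_c^2}}.$$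
   Context: $A$ is the linearization of the mean-field dynamics of the dissipative Kerr quantum Rabi model around the normal phase in the variables $(\delta Q,\delta P,\delta X,\delta Y)$, $D$ is the vacuum-noise diffusion matrix acting on the cavity quadratures, and $V$ is the steady-state covariance matrix; the quantity $\frac12(V_{11}+V_{22})-\frac1{2N}$ is the normal-phase photon-number fluctuation $\langle\delta\alpha^\dagger\delta\alpha\rangle$. *)

(* Defs.v *)
From mathcomp Require Import all_boot all_order all_algebra.
Set Implicit Arguments. Unset Strict Implicit. Unset Printing Implicit Defensive.
Import Order.TTheory GRing.Theory Num.Theory.
Local Open Scope ring_scope.

(* Drift matrix A of the linearized Kerr quantum Rabi model (variables dQ,dP,dX,dY),
   indices 0..3 correspond to the paper's 1..4. *)
Definition driftA (R : rcfType) (wa wc k l : R) : 'M[R]_4 :=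
  \matrix_(i < 4, j < 4)
    nth 0 (nth [::] [:: [:: - k ; wc ; 0 ; 0 ];
        [:: - wc ; - k ; - (2 * Num.sqrt 2 * l) ; 0 ];
        [:: 0 ; 0 ; 0 ; - wa ];
        [:: Num.sqrt 2 * l ; 0 ; wa ; 0 ] ] i) j.

Definition diffD (R : rcfType) (k N : R) : 'M[R]_4 :=
  \matrix_(i < 4, j < 4) (if (i == j) && (i < 2)%N then k / N else 0).

(* Main.v *)
Require Import Defs.
From mathcomp Require Import all_boot all_order all_algebra.
From mathcomp Require Import ring lra.
Import Order.TTheory GRing.Theory Num.Theory.
Local Open Scope ring_scope.

Ltac go EE L0 L1 L2 L3 Vs p q :=
  have := EE p q;
  rewrite !mxE !big_ord_recl !big_ord0 !mxE -val_eqE /= ?inordK //= L1 L2 L3 -?L0 ?inordK //=;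
  rewrite ?(Vs ord0 (inord 1)) ?(Vs ord0 (inord 2)) ?(Vs ord0 (inord 3))
          ?(Vs (inord 1) (inord 2)) ?(Vs (inord 1) (inord 3)) ?(Vs (inord 2) (inord 3)).

Theorem mainTheorem2 (R : rcfType) (wa wc k l N : R)
  (hwa : 0 < wa) (hwc : 0 < wc) (hk : 0 < k) (hl : 0 < l) (hN : 0 < N)
  (hcrit : 4 * l ^+ 2 != wa * wc * (1 + k ^+ 2 / wc ^+ 2))
  (V : 'M[R]_4) (hsym : V^T = V)
  (hlyap : driftA wa wc k l *m V + V *m (driftA wa wc k l)^T = - diffD k N) :
  (V ord0 ord0 + V (inord 1) (inord 1)) / 2 - 1 / (2 * N)
  = 1 / (2 * N) * (l ^+ 2 / (wa * wc - 4 * l ^+ 2 / (1 + k ^+ 2 / wc ^+ 2))).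
Proof.
have E i j := congr1 (fun M : 'M[R]_4 => M i j) hlyap.
have Vs i j : V j i = V i j by rewrite -{1}hsym mxE.
have L0 : ord0 = inord 0 :> 'I_4 by apply/val_inj; rewrite /= inordK.
have L1 : lift ord0 ord0 = inord 1 :> 'I_4 by apply/val_inj; rewrite /= inordK.
have L2 : lift ord0 (lift ord0 ord0) = inord 2 :> 'I_4 by apply/val_inj; rewrite /= inordK.
have L3 : lift ord0 (lift ord0 (lift ord0 ord0)) = inord 3 :> 'I_4 by apply/val_inj; rewrite /= inordK.
have EE p q := E (inord p) (inord q).
go EE L0 L1 L2 L3 Vs 0%N 0%N => e00.
go EE L0 L1 L2 L3 Vs 1%N 1%N => e11.
go EE L0 L1 L2 L3 Vs 2%N 2%N => e22.
go EE L0 L1 L2 L3 Vs 3%N 3%N => e33.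
go EE L0 L1 L2 L3 Vs 0%N 1%N => e01.
go EE L0 L1 L2 L3 Vs 0%N 2%N => e02.
go EE L0 L1 L2 L3 Vs 0%N 3%N => e03.
go EE L0 L1 L2 L3 Vs 1%N 3%N => e13.
clear E EE Vs L0 L1 L2 L3 hlyap hsym.
move: e00 e11 e22 e33 e01 e02 e03 e13.
move: (V ord0 ord0) (V ord0 (inord 1)) (V ord0 (inord 2)) (V ord0 (inord 3))
  (V (inord 1) (inord 1)) (V (inord 1) (inord 2)) (V (inord 1) (inord 3))
  (V (inord 2) (inord 3)) => a b c d e f g i.
move: (Num.sqrt 2) (@sqr_sqrtr R 2 (ler0n R 2)) (sqrtr_gt0 (2 : R)) => r hr2 hr.
rewrite ltr0n /= in hr.
move=> e00 e11 e22 e33 e01 e02 e03 e13.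
have wa0 : wa != 0 by rewrite gt_eqF.
have wc0 : wc != 0 by rewrite gt_eqF.
have k0 : k != 0 by rewrite gt_eqF.
have N0 : N != 0 by rewrite gt_eqF.
have two0 : 2 != 0 :> R by rewrite pnatr_eq0.
have s0 : r * l != 0 by rewrite gt_eqF // mulr_gt0.
have hi : i = 0.
  have : wa * i = 0 by lra.
  by move/eqP; rewrite mulf_eq0 (negbTE wa0) /= => /eqP.
rewrite hi in e13.
have hd : d = 0.
  have : (r * l) * d = 0 by lra.
  by move/eqP; rewrite mulf_eq0 (negbTE s0) /= => /eqP.
rewrite hd in e01 e02 e03 e13.
have e00' : 2 * (wc * b) = 2 * (k * a) - k / N by lra.
have hae : k * (a + e) = k / N - 2 * (r * l) * f.
  have : 2 * (k * (a + e)) = 2 * (k / N - 2 * (r * l) * f) by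
     rewrite mulrDr; move: e00 e11; rewrite -!(mulrA 2) /=; lra.
  by move/(mulfI two0).
have hf : wc * f = k * c by lra.
have hg : wc * g = - ((r * l) * a + wa * c) by lra.
have he : wc * e = 2 * k * b + wc * a + 2 * (r * l) * c by lra.
have ha : 2 * (r * l) * a + 2 * wa * c = (r * l) / (2 * N).
  have h1 := congr1 (fun t => wc * t) e13.
  have h2 := congr1 (fun t => k * t) hg.
  have h3 := congr1 (fun t => (r * l) * t) e00'.
  have h4 := congr1 (fun t => wa * t) hf.
  simpl in h1, h2, h3, h4.
  have : k * (2 * (r * l) * a + 2 * wa * c) = k * ((r * l) / (2 * N)).
    have -> : k * ((r * l) / (2 * N)) = (r * l) * (k / N) / 2 by field.
    lra.
  by move/(mulfI k0).
have hX : k * (- 2 * (wc^+2 + k^+2) * a - 4 * (r * l) * wc * c + (wc^+2 + k^+2) / N) = 0.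
  have h1 := congr1 (fun t => wc * wc * t) e11.
  have h2 := congr1 (fun t => wc * wc * t) e00'.
  have h3 := congr1 (fun t => k * k * t) e00'.
  have h4 := congr1 (fun t => k * wc * t) he.
  have h5 := congr1 (fun t => (r * l) * wc * t) hf.
  simpl in h1, h2, h3, h4, h5.
  lra.
have X0 : - 2 * (wc^+2 + k^+2) * a - 4 * (r * l) * wc * c + (wc^+2 + k^+2) / N = 0.
  by apply: (mulfI k0); rewrite hX mulr0.
have hc : c * (wa * (wc^+2 + k^+2) - 4 * l^+2 * wc) = - (r * l) * (wc^+2 + k^+2) / (4 * N).
  have h1 := congr1 (fun t => (r * l) * t) X0.
  have h2 := congr1 (fun t => (wc^+2 + k^+2) * t) ha.
  have h3 := congr1 (fun t => l^+2 * wc * c * t) hr2.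
  simpl in h1, h2, h3.
  lra.
have Den0 : wa * (wc^+2 + k^+2) - 4 * l^+2 * wc != 0.
  apply: contra hcrit => /eqP h; apply/eqP.
  have -> : wa * wc * (1 + k ^+ 2 / wc ^+ 2) = (wa * (wc^+2 + k^+2)) / wc by field.
  have -> : wa * (wc^+2 + k^+2) = 4 * l^+2 * wc by lra.
  by field.
have W0 : wc^+2 + k^+2 != 0 by rewrite gt_eqF // addr_gt0 // exprn_gt0.
have hf' : f = k * c / wc by apply: (mulfI wc0); rewrite hf; field; rewrite ?k0 ?N0 ?wc0 ?wa0 ?two0 ?Den0 ?W0 //.
have hae' : a + e = 1 / N - 2 * (r * l) * f / k by apply: (mulfI k0); rewrite hae; field; rewrite ?k0 ?N0 ?wc0 ?wa0 ?two0 ?Den0 ?W0 //.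
have hc' : c = - (r * l) * (wc^+2 + k^+2) / (4 * N * (wa * (wc^+2 + k^+2) - 4 * l^+2 * wc)).
  by apply: (mulIf Den0); rewrite hc; field; rewrite ?k0 ?N0 ?wc0 ?wa0 ?two0 ?Den0 ?W0 //.
transitivity (r^+2 * (l^+2 * (wc^+2 + k^+2) / (4 * N * (wa * (wc^+2 + k^+2) - 4 * l^+2 * wc) * wc))).
  rewrite hae' hf' hc'; field; rewrite ?k0 ?N0 ?wc0 ?wa0 ?two0 ?Den0 ?W0 //.
rewrite hr2.
have Den1 : wa * wc * (wc ^+ 2 + k ^+ 2) - 4 * l ^+ 2 * wc ^+ 2 != 0.
  have -> : wa * wc * (wc ^+ 2 + k ^+ 2) - 4 * l ^+ 2 * wc ^+ 2 = wc * (wa * (wc^+2 + k^+2) - 4 * l^+2 * wc) by ring.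
  by rewrite mulf_neq0.
field; rewrite ?k0 ?N0 ?wc0 ?wa0 ?two0 ?Den0 ?W0 ?Den1 //.
Qed.
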